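(* With the matrices defined in the context, the Neumann Schur complement $S_N:=\mathbf{B}\mathbf{A_N}^{-1}\mathbf{B}^T\in\mathbb{R}^{n^2\times n^2}$ satisfies $$S_N=I_{n^2}-\mathbb{1}\mathbb{1}^T,$$ where $\mathbb{1}=h(1,\dots,1)^T\in\mathbb{R}^{n^2}$ (a unit vector). Equivalently, $S_N=\mathbf{B}\mathbf{B}^\dagger$ is the orthogonal projector onto the orthogonal complement of $\operatorname{Ker}\mathbf{B}^T=\operatorname{span}\{\mathbb{1}\}$.
   Context: Fix an integer $n\ge 2$ and set $h=1/n$. Let $I_m$ denote the $m\times m$ identity matrix and $\otimes$ the Kronecker product. Let $\mathrm{B}\in\mathbb{R}^{n\times(n-1)}$ be $\mathrm{B}=\frac1h M$, where $M_{i,i}=1$ and $M_{i+1,i}=-1$ for $1\le i\le n-1$, all other entries $0$. Define $\mathrm{B}^u_x=I_n\otimes \mathrm{B}$, $\mathrm{B}^v_y=\mathrm{B}\otimes I_n$, $\mathrm{B}^q_x=I_{n-1}\otimes\mathrm{B}$, $\mathrm{B}^q_y=\mathrm{B}\otimes I_{n-1}$. Let $\mathbf{B}=\begin{bmatrix}-\mathrm{B}^u_x & -\mathrm{B}^v_y\end{bmatrix}\in\mathbb{R}^{n^2\times 2n(n-1)}$ and $\mathbf{C}=\begin{bmatrix}-(\mathrm{B}^q_y)^T & (\mathrm{B}^q_x)^T\end{bmatrix}\in\mathbb{R}^{(n-1)^2\times 2n(n-1)}$, and let $\mathbf{A_N}=\mathbf{B}^T\mathbf{B}+\mathbf{C}^T\mathbf{C}$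 (which is invertible). The superscript $\dagger$ denotes the Moore–Penrose pseudoinverse. *)

(* Defs.v *)
From mathcomp Require Import all_boot all_order all_algebra.
Set Implicit Arguments. Unset Strict Implicit. Unset Printing Implicit Defensive.
Import Order.TTheory GRing.Theory Num.Theory.
Local Open Scope ring_scope.

(* Row/column index k of a Kronecker product of m1 x n1 and m2 x n2 matrices
   is decomposed (standard convention) as k = k1 * m2 + k2, k1 < m1, k2 < m2. *)
Lemma kron_hi_proof m1 m2 (i : 'I_(m1 * m2)) : (i %/ m2 < m1)%N.
Proof.
case: i => i /=; case: m2 => [|m2]; first by rewrite muln0.
by rewrite ltn_divLR.
Qed.

Lemma kron_lo_proof m1 m2 (i : 'I_(m1 * m2)) : (i %% m2 < m2)%N.
Proof.
case: i => i /=; case: m2 => [|m2]; first by rewrite muln0.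
by rewrite ltn_mod.
Qed.

Definition kron_hi m1 m2 (i : 'I_(m1 * m2)) : 'I_m1 := Ordinal (kron_hi_proof i).
Definition kron_lo m1 m2 (i : 'I_(m1 * m2)) : 'I_m2 := Ordinal (kron_lo_proof i).

Definition kron (R : pzRingType) m1 n1 m2 n2
  (A : 'M[R]_(m1, n1)) (B : 'M[R]_(m2, n2)) : 'M[R]_(m1 * m2, n1 * n2) :=
  \matrix_(i, j) (A (kron_hi i) (kron_hi j) * B (kron_lo i) (kron_lo j)).

Section Model.
Variables (R : fieldType) (n : nat).

Definition hh : R := (n%:R)^-1.

Definition Mmat : 'M[R]_(n, n.-1) :=
  \matrix_(i, j) (if (i : nat) == j then 1 else if (i : nat) == j.+1 then -1 else 0).

Definition Bmat : 'M[R]_(n, n.-1) := hh^-1 *: Mmat.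

Definition Bux : 'M[R]_(n * n, n * n.-1) := kron (1%:M : 'M[R]_n) Bmat.
Definition Bvy : 'M[R]_(n * n, n * n.-1) :=
  castmx (erefl, mulnC n.-1 n) (kron Bmat (1%:M : 'M[R]_n)).
Definition Bqx : 'M[R]_(n * n.-1, n.-1 * n.-1) :=
  castmx (mulnC n.-1 n, erefl) (kron (1%:M : 'M[R]_n.-1) Bmat).
Definition Bqy : 'M[R]_(n * n.-1, n.-1 * n.-1) := kron Bmat (1%:M : 'M[R]_n.-1).

Definition BB : 'M[R]_(n * n, n * n.-1 + n * n.-1) := row_mx (- Bux) (- Bvy).
Definition CC : 'M[R]_(n.-1 * n.-1, n * n.-1 + n * n.-1) := row_mx (- Bqy^T) (Bqx^T).

Definition AN : 'M[R]_(n * n.-1 + n * n.-1) := BB^T *m BB + CC^T *m CC.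

Definition SN : 'M[R]_(n * n) := BB *m invmx AN *m BB^T.

Definition one_vec : 'cV[R]_(n * n) := const_mx hh.

End Model.

(* Main.v *)
Require Import Defs.
From mathcomp Require Import all_boot all_order all_algebra.
From mathcomp Require Import zify ring lra.
Import Order.TTheory GRing.Theory Num.Theory.
Local Open Scope ring_scope.
Set Implicit Arguments. Unset Strict Implicit.

Section Aux.
Variable R : realFieldType.

Definition vc p (z : 'cV[R]_p) (k : nat) : R :=
  match (insub k : option 'I_p) with Some i => z i 0 | None => 0 end.

Lemma vcE p (z : 'cV[R]_p) (i : 'I_p) : vc z i = z i 0.
Proof. by rewrite /vc valK. Qed.

Lemma vcO p (z : 'cV[R]_p) k (hk : (k < p)%N) : vc z k = z (Ordinal hk) 0.
Proof. by rewrite /vc insubT. Qed.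

Definition me r c (A : 'M[R]_(r,c)) (i j : nat) : R :=
  match (insub i : option 'I_r), (insub j : option 'I_c) with
  | Some i', Some j' => A i' j' | _, _ => 0 end.

Lemma meO r c (A : 'M[R]_(r,c)) i j (hi : (i < r)%N) (hj : (j < c)%N) :
  me A i j = A (Ordinal hi) (Ordinal hj).
Proof. by rewrite /me !insubT. Qed.

Lemma sum_pair a b (F : nat -> R) :
  \sum_(l < a * b) F l = \sum_(p < a) \sum_(q < b) F (p * b + q)%N.
Proof.
elim: a => [|a IH]; first by rewrite mul0n !big_ord0.
rewrite big_ord_recr /= -IH mulSnr.
rewrite -(big_mkord xpredT) (big_cat_nat _ (n := a * b)) //= ?leq_addr //.
rewrite big_mkord; congr (_ + _).
rewrite -{1}[(a * b)%N]add0n big_addn addKn big_mkord; apply: eq_bigr => i _; by rewrite addnC.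
Qed.


Lemma meE r c (A : 'M[R]_(r,c)) (i : 'I_r) (j : 'I_c) : me A i j = A i j.
Proof. by rewrite /me !valK. Qed.

Lemma divmodP a b m (hb : (b < m)%N) : ((a * m + b) %/ m = a)%N /\ ((a * m + b) %% m = b)%N.
Proof.
have m0 : (0 < m)%N by apply: leq_ltn_trans hb.
by rewrite divnMDl // divn_small // addn0 modnMDl modn_small.
Qed.

Lemma kron_mulE m1 n1 m2 n2 (A : 'M[R]_(m1,n1)) (B : 'M[R]_(m2,n2))
  (z : 'cV[R]_(n1 * n2)) a b : (a < m1)%N -> (b < m2)%N ->
  vc (kron A B *m z) (a * m2 + b) =
  \sum_(p < n1) \sum_(q < n2) me A a p * me B b q * vc z (p * n2 + q).
Proof.
move=> ha hb.
have h : (a * m2 + b < m1 * m2)%N.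
  apply: (@leq_trans (a * m2 + m2)); first by rewrite ltn_add2l.
  by rewrite -mulSnr leq_mul2r ha orbT.
rewrite (vcO _ h) mxE.
transitivity (\sum_(l < n1 * n2) (me A a (l %/ n2) * me B b (l %% n2) * vc z l)).
  apply: eq_bigr => l _; rewrite mxE vcE.
  have [e1 e2] := divmodP a hb.
  by rewrite -!meE /= e1 e2.
rewrite (sum_pair n1 n2 (fun l => me A a (l %/ n2) * me B b (l %% n2) * vc z l)); apply: eq_bigr => p _; apply: eq_bigr => q _.
by have [-> ->] := divmodP p (ltn_ord q).
Qed.

Lemma tr_kron m1 n1 m2 n2 (A : 'M[R]_(m1,n1)) (B : 'M[R]_(m2,n2)) :
  (kron A B)^T = kron A^T B^T.
Proof. by apply/matrixP => i j; rewrite !mxE. Qed.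

Lemma vc_cast p q (e : p = q) (z : 'cV[R]_p) k : vc (castmx (e, erefl) z) k = vc z k.
Proof. by case: q / e. Qed.

Lemma castmx_mulr p q r (e : p = q) (K : 'M[R]_(r, p)) (z : 'cV[R]_p) :
  castmx (erefl, e) K *m castmx (e, erefl) z = K *m z.
Proof. by case: q / e. Qed.

Lemma castmx_mull p q r (e : p = q) (K : 'M[R]_(p, r)) (z : 'cV[R]_r) :
  castmx (e, erefl) K *m z = castmx (e, erefl) (K *m z).
Proof. by case: q / e. Qed.

Lemma me1 r (a b : nat) : (a < r)%N -> (b < r)%N -> me (1%:M : 'M[R]_r) a b = (a == b)%:R.
Proof. by move=> ha hb; rewrite meO !mxE. Qed.

Lemma me1s r (a b : nat) : (a < r)%N -> (b < r)%N -> me (1%:M : 'M[R]_r) a b = (b == a)%:R.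
Proof. by move=> ha hb; rewrite meO !mxE eq_sym. Qed.

Lemma metr r c (A : 'M[R]_(r,c)) a b : me A^T a b = me A b a.
Proof.
rewrite /me; case: (insub a) => [x|]; case: (insub b) => [y|] //.
by rewrite mxE.
Qed.

Lemma sum_delta m (t : nat) (g : nat -> R) :
  \sum_(p < m) (t == p :> nat)%:R * g p = if (t < m)%N then g t else 0.
Proof.
case: ifP => ht.
  rewrite (bigD1 (Ordinal ht)) //= eqxx mul1r big1 ?addr0 // => i hi.
  case: eqP => [e|]; last by rewrite mul0r.
  by case/eqP: hi; apply: val_inj.
rewrite big1 // => i _; case: eqP => [e|]; last by rewrite mul0r.
by move: ht; rewrite e ltn_ord.
Qed.

Lemma castmx_mulr2 p q r (e : p = q) (K : 'M[R]_(r, p)) (z : 'cV[R]_q) :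
  castmx (erefl, e) K *m z = K *m castmx (esym e, erefl) z.
Proof. by case: q / e in z *. Qed.

Lemma idx_lt a b p q : (p < a)%N -> (q < b)%N -> (p * b + q < a * b)%N.
Proof.
move=> hp hq; apply: (@leq_trans (p * b + b)); first by rewrite ltn_add2l.
by rewrite -mulSnr leq_mul2r hp orbT.
Qed.

Lemma vc_eqg N a b (e : N = (a * b)%N) (z1 z2 : 'cV[R]_N) :
  (forall p q, (p < a)%N -> (q < b)%N -> vc z1 (p * b + q) = vc z2 (p * b + q)) -> z1 = z2.
Proof.
subst N; move=> H; apply/colP => k; rewrite -!vcE.
have hb : (0 < b)%N.
  have := ltn_ord k; case: (posnP b) => [e|//]; by rewrite {2}e muln0.
rewrite (divn_eq k b); apply: H; last by rewrite ltn_mod.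
by rewrite ltn_divLR.
Qed.

Lemma vc_eq a b (z1 z2 : 'cV[R]_(a * b)) :
  (forall p q, (p < a)%N -> (q < b)%N -> vc z1 (p * b + q) = vc z2 (p * b + q)) -> z1 = z2.
Proof. exact: vc_eqg. Qed.

Lemma vc0 p k : vc (0 : 'cV[R]_p) k = 0.
Proof. by rewrite /vc; case: insub => // i; rewrite mxE. Qed.

Lemma vcN p (z : 'cV[R]_p) k : vc (- z) k = - vc z k.
Proof. by rewrite /vc; case: insub => [i|]; rewrite ?mxE ?oppr0. Qed.

Lemma vcZ p a (z : 'cV[R]_p) k : vc (a *: z) k = a * vc z k.
Proof. by rewrite /vc; case: insub => [i|]; rewrite ?mxE ?mulr0. Qed.

Lemma vc_const p a k : (k < p)%N -> vc (const_mx a : 'cV[R]_p) k = a.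
Proof. by move=> hk; rewrite (vcO _ hk) mxE. Qed.

Lemma tel b (f : nat -> R) : \sum_(j < b) (f j.+1 - f j) = f b - f 0%N.
Proof.
elim: b => [|b IH]; first by rewrite big_ord0 subrr.
by rewrite big_ord_recr /= IH; ring.
Qed.

Lemma sq_ge0 p (z : 'cV[R]_p) : 0 <= (z^T *m z) 0 0.
Proof. by rewrite mxE; apply: sumr_ge0 => i _; rewrite mxE -expr2 sqr_ge0. Qed.

Lemma sq_eq0 p (z : 'cV[R]_p) : (z^T *m z) 0 0 = 0 -> z = 0.
Proof.
rewrite mxE => H; apply/colP => i; rewrite mxE.
have hge : forall j : 'I_p, true -> 0 <= z^T 0 j * z j 0.
  by move=> j _; rewrite mxE -expr2 sqr_ge0.
have := @psumr_eq0P R 'I_p xpredT _ hge H i isT.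
by rewrite mxE => /eqP; rewrite mulf_eq0 orbb => /eqP.
Qed.

Lemma mx0_col p q (M : 'M[R]_(p, q)) : (forall y : 'cV[R]_q, M *m y = 0) -> M = 0.
Proof.
move=> H; apply/matrixP => i j.
have := H (delta_mx j 0); rewrite -colE => /(congr1 (fun N : 'M[R]_(p, 1) => N i 0)).
by rewrite !mxE.
Qed.

End Aux.

Section Model2.
Variables (R : realFieldType) (m : nat).
Local Notation n := m.+1.
Local Notation c := ((hh R n)^-1).
Local Notation Bm := (Bmat R n).

Lemma c_neq0 : c != 0.
Proof. by rewrite invr_eq0 /hh invr_eq0 pnatr_eq0. Qed.

Lemma meB b q : (b < n)%N -> (q < m)%N ->
  me Bm b q = c * ((b == q :> nat)%:R - (b == q.+1 :> nat)%:R).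
Proof.
move=> hb hq; rewrite (meO _ hb hq) !mxE /=.
case: eqP => e1; case: eqP => e2; try lia; rewrite ?subr0 ?sub0r ?subrr ?mulr1 ?mulrN1 ?mulr0 //.
Qed.

Lemma sumMt j (g : nat -> R) : (j < m)%N ->
  \sum_(q < n) me Bm q j * g q = c * (g j - g j.+1).
Proof.
move=> hj.
transitivity (c * (\sum_(q < n) (j == q :> nat)%:R * g q - \sum_(q < n) (j.+1 == q :> nat)%:R * g q)).
  rewrite -sumrB mulr_sumr; apply: eq_bigr => q _.
  rewrite meB //= ?ltn_ord // [(j == q :> nat)]eq_sym [(j.+1 == q :> nat)]eq_sym.
  by rewrite -mulrA mulrBl.
rewrite (sum_delta n j g) (sum_delta n j.+1 g).
have -> : (j < n)%N by lia.
by have -> : (j.+1 < n)%N by lia.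
Qed.

Definition Yv (y : 'cV[R]_(n * n)) a b := vc y (a * n + b)%N.

Lemma E1 (y : 'cV[R]_(n * n)) a j : (a < n)%N -> (j < m)%N ->
  vc ((Bux R n)^T *m y) (a * m + j) = c * (Yv y a j - Yv y a j.+1).
Proof.
move=> ha hj; rewrite /Bux tr_kron kron_mulE //.
transitivity (\sum_(p < n) (a == p :> nat)%:R * \sum_(q < n) me Bm q j * Yv y p q).
  apply: eq_bigr => p _; rewrite mulr_sumr; apply: eq_bigr => q _.
  by rewrite !metr me1s ?ltn_ord // /Yv mulrA.
by rewrite (sum_delta n a (fun p => \sum_(q < n) me Bm q j * Yv y p q)) ha sumMt.
Qed.

Lemma E2 (y : 'cV[R]_(n * n)) i b : (i < m)%N -> (b < n)%N ->
  vc ((Bvy R n)^T *m y) (i * n + b) = c * (Yv y i b - Yv y i.+1 b).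
Proof.
move=> hi hb; rewrite /Bvy trmx_cast /= castmx_mull vc_cast tr_kron kron_mulE //.
transitivity (\sum_(p < n) me Bm p i * \sum_(q < n) (b == q :> nat)%:R * Yv y p q).
  apply: eq_bigr => p _; rewrite mulr_sumr; apply: eq_bigr => q _.
  by rewrite !metr me1s ?ltn_ord // /Yv mulrA.
have E := sumMt (fun p => Yv y p b) hi; rewrite /= in E; rewrite -E; apply: eq_bigr => p _.
by rewrite (sum_delta n b (fun q => Yv y p q)) hb.
Qed.

Definition Uv (u : 'cV[R]_(n * m)) a j := vc u (a * m + j)%N.
Definition Vv (v : 'cV[R]_(n * m)) i b := vc v (i * n + b)%N.

Lemma E5 (u : 'cV[R]_(n * m)) p q : (p < m)%N -> (q < m)%N ->
  vc ((Bqy R n)^T *m u) (p * m + q) = c * (Uv u p q - Uv u p.+1 q).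
Proof.
move=> hp hq; rewrite /Bqy tr_kron kron_mulE //.
transitivity (\sum_(a < n) me Bm a p * \sum_(j < m) (q == j :> nat)%:R * Uv u a j).
  apply: eq_bigr => a _; rewrite mulr_sumr; apply: eq_bigr => j _.
  by rewrite !metr me1s ?ltn_ord // /Uv mulrA.
have E := sumMt (fun a => Uv u a q) hp; rewrite /= in E; rewrite -E; apply: eq_bigr => a _.
by rewrite (sum_delta m q (fun j => Uv u a j)) hq.
Qed.

Lemma E6 (v : 'cV[R]_(n * m)) p q : (p < m)%N -> (q < m)%N ->
  vc ((Bqx R n)^T *m v) (p * m + q) = c * (Vv v p q - Vv v p q.+1).
Proof.
move=> hp hq; rewrite /Bqx trmx_cast /= castmx_mulr2 tr_kron kron_mulE //.
transitivity (\sum_(a < m) (p == a :> nat)%:R * \sum_(b < n) me Bm b q * Vv v a b).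
  apply: eq_bigr => a _; rewrite mulr_sumr; apply: eq_bigr => b _.
  by rewrite !metr me1s ?ltn_ord // vc_cast /Vv mulrA.
by rewrite (sum_delta m p (fun a => \sum_(b < n) me Bm b q * Vv v a b)) hp sumMt.
Qed.

Lemma BBt_mul (y : 'cV[R]_(n * n)) :
  (BB R n)^T *m y = col_mx (- ((Bux R n)^T *m y)) (- ((Bvy R n)^T *m y)).
Proof. by rewrite /BB tr_row_mx mul_col_mx !linearN /= !mulNmx. Qed.

Lemma BB_mul (u v : 'cV[R]_(n * m)) :
  BB R n *m col_mx u v = - (Bux R n *m u) - (Bvy R n *m v).
Proof. by rewrite /BB mul_row_col !mulNmx. Qed.

Lemma CC_mul (u v : 'cV[R]_(n * m)) :
  CC R n *m col_mx u v = - ((Bqy R n)^T *m u) + (Bqx R n)^T *m v.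
Proof. by rewrite /CC mul_row_col !mulNmx. Qed.

Lemma F1y (y : 'cV[R]_(n * n)) : CC R n *m ((BB R n)^T *m y) = 0.
Proof.
rewrite BBt_mul CC_mul !mulmxN opprK.
apply/eqP; rewrite addr_eq0 opprK; apply/eqP; apply: vc_eq => p q hp hq.
rewrite E5 // E6 // /Uv /Vv E1 ?E1 ?(E2 y) ?(E2 y); try lia.
set c1 := (hh R n)^-1; set a1 := Yv y p q; set a2 := Yv y p q.+1; set a3 := Yv y p.+1 q; set a4 := Yv y p.+1 q.+1.
ring.
Qed.

Lemma F1 : CC R n *m (BB R n)^T = 0.
Proof. by apply: mx0_col => y; rewrite -mulmxA F1y. Qed.

Lemma F2 : (BB R n)^T *m one_vec R n = 0.
Proof.
rewrite BBt_mul; apply/eqP; rewrite col_mx_eq0 !oppr_eq0; apply/andP; split; apply/eqP.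
  apply: vc_eq => a j ha hj; rewrite E1 // vc0 /Yv !vc_const ?subrr ?mulr0 //; apply: idx_lt; lia.
apply: (vc_eqg (mulnC _ _)) => a j ha hj; rewrite (E2 (one_vec R n)) // vc0 /Yv !vc_const ?subrr ?mulr0 //; apply: idx_lt; lia.
Qed.

Lemma F4 (y : 'cV[R]_(n * n)) : (BB R n)^T *m y = 0 -> y = const_mx (vc y 0).
Proof.
rewrite BBt_mul => /eqP; rewrite col_mx_eq0 !oppr_eq0 => /andP [/eqP H1 /eqP H2].
have h1 : forall a j, (a < n)%N -> (j < m)%N -> Yv y a j.+1 = Yv y a j.
  move=> a j ha hj; have := E1 y ha hj; rewrite H1 vc0 => /esym/eqP.
  by rewrite mulf_eq0 (negbTE c_neq0) /= subr_eq0 => /eqP ->.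
have h2 : forall i b, (i < m)%N -> (b < n)%N -> Yv y i.+1 b = Yv y i b.
  move=> i b hi hb; have := E2 y hi hb; rewrite H2 vc0 => /esym/eqP.
  by rewrite mulf_eq0 (negbTE c_neq0) /= subr_eq0 => /eqP ->.
have h3 : forall a b, (a < n)%N -> (b < n)%N -> Yv y a b = Yv y 0 0.
  move=> a b; elim: b => [|b IH] ha hb.
    elim: a ha => [|a IHa] ha //; rewrite h2 ?IHa //; lia.
  rewrite h1 ?IH //; lia.
apply: vc_eq => a b ha hb; rewrite vc_const ?idx_lt //.
by have := h3 a b ha hb; rewrite /Yv mul0n addn0.
Qed.

Lemma F3 (x : 'cV[R]_(n * m + n * m)) : BB R n *m x = 0 -> CC R n *m x = 0 -> x = 0.
Proof.
move=> HB HC.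
rewrite -(vsubmxK x) in HB HC *.
set u := usubmx x in HB HC *; set v := dsubmx x in HB HC *.
have curl : forall p q, (p < m)%N -> (q < m)%N ->
    Uv u p.+1 q - Uv u p q = Vv v p q.+1 - Vv v p q.
  move=> p q hp hq; move: HC; rewrite CC_mul => /eqP; rewrite addrC subr_eq0 => /eqP.
  move=> /(congr1 (fun z => vc z (p * m + q)%N)).
  rewrite E5 // E6 // => /(mulfI c_neq0) e; lra.
pose phi : 'cV[R]_(n * n) := \col_(k < n * n)
   (\sum_(i < k %/ n) Vv v i 0 + \sum_(j < k %% n) Uv u (k %/ n) j).
have PhiE : forall a b, (a < n)%N -> (b < n)%N ->
    Yv phi a b = \sum_(i < a) Vv v i 0 + \sum_(j < b) Uv u a j.
  move=> a b ha hb; rewrite /Yv (vcO _ (idx_lt ha hb)) mxE /=.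
  by have [-> ->] := divmodP a hb.
have claim : (BB R n)^T *m phi = ((hh R n)^-1) *: col_mx u v.
  rewrite BBt_mul scale_col_mx; congr col_mx.
    apply: vc_eq => a j ha hj; rewrite vcN E1 // vcZ !PhiE //; try lia.
    rewrite big_ord_recr /= /Uv; ring.
  apply: (vc_eqg (mulnC _ _)) => i b hi hb; rewrite vcN E2 // vcZ !PhiE //; try lia.
  have T : \sum_(j < b) Uv u i.+1 j = \sum_(j < b) Uv u i j + (Vv v i b - Vv v i 0).
    rewrite -(tel b (fun j => Vv v i j)) -big_split; apply: eq_bigr => j _ /=.
    have := ltn_ord j; move=> hj.
    rewrite -curl; [ring | lia | lia].
  rewrite T big_ord_recr /= /Vv; ring.
have e : (hh R n)^-1 *: ((col_mx u v)^T *m col_mx u v) = 0.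
  by rewrite scalemxAr -claim mulmxA -trmx_mul HB trmx0 mul0mx.
move/eqP: e; rewrite scaler_eq0 (negbTE c_neq0) /= => /eqP e.
by apply: sq_eq0; rewrite e mxE.
Qed.

Lemma AN_tr : (AN R n)^T = AN R n.
Proof. by rewrite /AN linearD /= !trmx_mul !trmxK. Qed.

Lemma energy (x : 'cV[R]_(n * m + n * m)) : (x^T *m (AN R n *m x)) 0 0 = 0 -> x = 0.
Proof.
have -> : x^T *m (AN R n *m x) =
   (BB R n *m x)^T *m (BB R n *m x) + (CC R n *m x)^T *m (CC R n *m x).
  by rewrite /AN mulmxDl mulmxDr !trmx_mul !mulmxA.
rewrite mxE => /eqP; rewrite paddr_eq0 ?sq_ge0 // => /andP [/eqP h1 /eqP h2].
by apply: F3; apply: sq_eq0.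
Qed.

Lemma AN_unit : AN R n \in unitmx.
Proof.
rewrite unitmxE unitfE; apply/negP => /det0P [w nw0 wA].
have : w^T = 0.
  apply: energy.
  have -> : AN R n *m w^T = (w *m AN R n)^T by rewrite trmx_mul AN_tr.
  by rewrite wA trmx0 mulmx0 mxE.
move/(congr1 trmx); rewrite trmxK trmx0 => e.
by rewrite e eqxx in nw0.
Qed.

Lemma F5 : (one_vec R n)^T *m one_vec R n = 1%:M.
Proof.
apply/matrixP => i j; rewrite !ord1 !mxE.
rewrite (eq_bigr (fun _ => hh R n * hh R n)); last by move=> k _; rewrite !mxE.
rewrite sumr_const card_ord /hh eqxx -[X in X = _]mulr_natr natrM.
have hn0 : n%:R != 0 :> R by rewrite pnatr_eq0.
transitivity (1 : R).
  by field; rewrite nat1r.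
by [].
Qed.

Lemma SN_eq : SN R n = 1%:M - one_vec R n *m (one_vec R n)^T.
Proof.
have Au := AN_unit.
have S1 : SN R n *m one_vec R n = 0 by rewrite /SN -!mulmxA F2 !mulmx0.
have St : (SN R n)^T = SN R n.
  by rewrite /SN !trmx_mul trmxK trmx_inv AN_tr mulmxA.
have oS : (one_vec R n)^T *m SN R n = 0 by rewrite -St -trmx_mul S1 trmx0.
have CB := F1.
have BC : BB R n *m (CC R n)^T = 0.
  by have := congr1 trmx CB; rewrite trmx_mul trmxK trmx0.
have QA : (CC R n)^T *m CC R n *m AN R n = AN R n *m ((CC R n)^T *m CC R n).
  have h1 : (CC R n)^T *m CC R n *m ((BB R n)^T *m BB R n) = 0.
    by rewrite !mulmxA -(mulmxA _ (CC R n)) CB mulmx0 mul0mx.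
  have h2 : (BB R n)^T *m BB R n *m ((CC R n)^T *m CC R n) = 0.
    by rewrite !mulmxA -(mulmxA _ (BB R n)) BC mulmx0 mul0mx.
  by rewrite /AN mulmxDr mulmxDl h1 h2.
have AiQ : invmx (AN R n) *m ((CC R n)^T *m CC R n) =
           (CC R n)^T *m CC R n *m invmx (AN R n).
  transitivity (invmx (AN R n) *m ((CC R n)^T *m CC R n *m AN R n) *m invmx (AN R n)).
    by rewrite -!mulmxA (mulmxV Au) mulmx1.
  by rewrite QA !mulmxA (mulVmx Au) mul1mx.
have QAB : (CC R n)^T *m (CC R n *m (invmx (AN R n) *m (BB R n)^T)) = 0.
  by rewrite !mulmxA -AiQ -!mulmxA CB !mulmx0.
have PB : (BB R n)^T *m BB R n = AN R n - (CC R n)^T *m CC R n by rewrite /AN addrK.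
have SS : SN R n *m SN R n = SN R n.
  rewrite /SN.
  transitivity (BB R n *m invmx (AN R n) *m ((BB R n)^T *m BB R n) *m invmx (AN R n) *m (BB R n)^T).
    by rewrite !mulmxA.
  by rewrite PB mulmxBr !mulmxBl -!mulmxA (mulKmx Au) QAB !mulmx0 subr0.
have Sker : forall y : 'cV[R]_(n * n), SN R n *m y = 0 -> (BB R n)^T *m y = 0.
  move=> y Hy; set w := invmx (AN R n) *m ((BB R n)^T *m y).
  have Aw : AN R n *m w = (BB R n)^T *m y by rewrite /w mulKVmx.
  suff w0 : w = 0 by rewrite -Aw w0 mulmx0.
  apply: energy; rewrite Aw.
  have -> : w^T = y^T *m BB R n *m invmx (AN R n).
    by rewrite /w !trmx_mul trmxK trmx_inv AN_tr.
  have -> : y^T *m BB R n *m invmx (AN R n) *m ((BB R n)^T *m y) = y^T *m (SN R n *m y).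
    by rewrite /SN !mulmxA.
  by rewrite Hy mulmx0 mxE.
have Sy : forall y : 'cV[R]_(n * n), SN R n *m y = y - one_vec R n *m ((one_vec R n)^T *m y).
  move=> y; set z := y - SN R n *m y.
  have Sz : SN R n *m z = 0 by rewrite /z mulmxBr mulmxA SS subrr.
  have zk := F4 (Sker _ Sz).
  have zo : z = (vc z 0 * n%:R) *: one_vec R n.
    rewrite {1}zk; apply/matrixP => i j; rewrite !mxE /hh mulfK //.
    by rewrite pnatr_eq0.
  have ez : one_vec R n *m ((one_vec R n)^T *m z) = z.
    by rewrite {1}zo -!scalemxAr F5 mulmx1 -zo.
  have oz : (one_vec R n)^T *m z = (one_vec R n)^T *m y.
    by rewrite /z mulmxBr mulmxA oS mul0mx subr0.
  by rewrite -oz ez /z opprB addrC subrK.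
apply/eqP; rewrite -subr_eq0; apply/eqP; apply: mx0_col => y.
by rewrite mulmxBl Sy mulmxBl mul1mx mulmxA subrr.
Qed.
End Model2.

Theorem corollary2 (R : realFieldType) (n : nat) (hn : (2 <= n)%N) :
  AN R n \in unitmx /\
  SN R n = 1%:M - one_vec R n *m (one_vec R n)^T.
Proof.
case: n hn => [|m] // hn.
split; [exact: AN_unit | exact: SN_eq].
Qed.
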